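(* Let $\mathcal G$ be a collection of subsets of $[n]$ such that the number of sets $C\in\mathcal G$ containing two distinct elements $i,j$ is the same for all $i\ne j$, and let $c_2=|\{C\in\mathcal G:\{1,2\}\subseteq C\}|$. Let $S$ be the sampling with $S=C$ with probability $1/|\mathcal G|$ for each $C\in\mathcal G$, assume its support is $c_1$-uniform, let $\mathbf S=\mathbf I_S$ and $\theta_{\mathbf S}=\frac1{c_1p_S}=\frac{|\mathcal G|}{c_1}$. (i) If $\mathbf W=\mathrm{diag}(w_1,\dots,w_n)\succ0$, then $$\rho\le\max_{i}\Big\{\Big(\frac{|\mathcal G|}{c_1}-1\Big)w_i+\sum_{j\ne i}w_j\Big|\frac{|\mathcal G|c_2}{c_1^2}-1\Big|\Big\}.$$ (ii) If $\mathbf W=\mathbf I$, then $$\rho=\max\Big\{\frac{|\mathcal G|}{c_1}\Big(1+(n-1)\frac{c_2}{c_1}\Big)-n,\ \frac{|\mathcal G|}{c_1}\Big(1-\frac{c_2}{c_1}\Big)\Big\}.$$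
   Context: $c_1$-uniform support: $|\{C\in\mathcal G:i\in C\}|=c_1$ for all $i\in[n]$, with $c_1\ge1$. $\mathbf I_S$ is the column submatrix of the $n\times n$ identity with columns in $S$; $e$ all-ones; $\Pi_{\mathbf S}=\mathbf S(\mathbf S^\top\mathbf W\mathbf S)^\dagger\mathbf S^\top\mathbf W$; $\rho=\lambda_{\max}\big(\mathbf W^{1/2}(\mathbb{E}[\theta_{\mathbf S}^2\Pi_{\mathbf S}ee^\top\Pi_{\mathbf S}^\top]-ee^\top)\mathbf W^{1/2}\big)$. *)

(* Defs.v *)
From HB Require Import structures.
From mathcomp Require Import all_boot all_order all_algebra.
From Stdlib Require Import ClassicalEpsilon.
Set Implicit Arguments. Unset Strict Implicit. Unset Printing Implicit Defensive.
Import Order.TTheory GRing.Theory Num.Theory.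
Local Open Scope ring_scope.

Section Defs.
Variable R : rcfType.

(* Moore--Penrose pseudoinverse: the (unique) matrix satisfying the four
   Penrose equations (it always exists for real matrices). *)
Definition mx_pinv m n (A : 'M[R]_(m, n)) : 'M[R]_(n, m) :=
  epsilon (inhabits 0) (fun B : 'M[R]_(n, m) =>
    [/\ A *m B *m A = A, B *m A *m B = B,
        (A *m B)^T = A *m B & (B *m A)^T = B *m A]).

Definition lambda_max n (M : 'M[R]_n) : R :=
  epsilon (inhabits 0) (fun l : R =>
    eigenvalue M l /\ forall a, eigenvalue M a -> a <= l).

(* I_C : column submatrix of the n x n identity with columns in C *)
Definition colsel n (C : {set 'I_n}) : 'M[R]_(n, #|C|) :=
  \matrix_(i < n, k < #|C|) (i == enum_val k)%:R.

Definition proj_S n (W : 'M[R]_n) (C : {set 'I_n}) : 'M[R]_n :=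
  let S := colsel C in S *m mx_pinv (S^T *m W *m S) *m S^T *m W.

Definition ones n : 'cV[R]_n := const_mx 1.

(* theta_S = 1/(c1 p_S) = |G|/c1 for the uniform sampling over G *)
Definition theta n (G : {set {set 'I_n}}) (c1 : nat) : R := #|G|%:R / c1%:R.

(* E[theta^2 Pi_S e e^T Pi_S^T] for S uniform over G *)
Definition expect_term n (W : 'M[R]_n) (G : {set {set 'I_n}}) (c1 : nat)
  : 'M[R]_n :=
  (#|G|%:R)^-1 *: \sum_(C in G)
     (theta G c1 ^+ 2 *: (proj_S W C *m ones n *m (ones n)^T *m (proj_S W C)^T)).

(* rho = lambda_max(W^{1/2} (E[...] - e e^T) W^{1/2}); Whalf is W^{1/2} *)
Definition rho n (W Whalf : 'M[R]_n) (G : {set {set 'I_n}}) (c1 : nat) : R :=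
  lambda_max (Whalf *m (expect_term W G c1 - ones n *m (ones n)^T) *m Whalf).

(* maximum of a finite family indexed by 'I_n (0 if n = 0) *)
Definition fmax n : ('I_n -> R) -> R :=
  match n with
  | 0 => fun _ => 0
  | m.+1 => fun f => \big[Num.max/f ord0]_(j < m.+1) f j
  end.

End Defs.

Definition pair_count n (G : {set {set 'I_n}}) (i j : 'I_n) : nat :=
  #|[set C in G | (i \in C) && (j \in C)]|.

(* same count, with the two elements given by their (0-based) nat values *)
Definition pair_count_nat n (G : {set {set 'I_n}}) (a b : nat) : nat :=
  #|[set C in G | [exists i in C, val i == a] && [exists j in C, val j == b]]|.

(* Main.v *)
Require Import Defs.
From HB Require Import structures.
From mathcomp Require Import all_boot all_order all_algebra.
From Stdlib Require Import ClassicalEpsilon.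
From mathcomp Require Import complex polyrcf.
From mathcomp Require Import ring lra.
Import Order.TTheory GRing.Theory Num.Theory.
Local Open Scope ring_scope.

Section S.
Variable R : rcfType.

Lemma pinv_unit k (A : 'M[R]_k) : A \in unitmx -> mx_pinv A = invmx A.
Proof.
move=> Au; rewrite /mx_pinv.
set P := fun B : 'M[R]_k => _.
have [h1 _ _ _] : P (epsilon (inhabits 0) P).
  apply: epsilon_spec; exists (invmx A); rewrite /P mulmxV // mulVmx //. by rewrite !mul1mx trmx1.
move: h1 => /(congr1 (fun X => invmx A *m X *m invmx A)).
rewrite !mulmxA mulVmx // mul1mx mulmxK // mul1mx; by move=> ->.
Qed.

Lemma colselT_ones n (C : {set 'I_n}) : (colsel R C)^T *m ones R n = ones R #|C|.
Proof.
apply/matrixP => k l; rewrite !mxE (bigD1 (enum_val k)) //= big1.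
  by rewrite !mxE eqxx mulr1 addr0.
by move=> j /negbTE hj; rewrite !mxE hj mul0r.
Qed.

Lemma colsel_ones n (C : {set 'I_n}) :
  colsel R C *m ones R #|C| = \col_i (i \in C)%:R.
Proof.
apply/matrixP => i l; rewrite !mxE.
under eq_bigr do rewrite !mxE mulr1.
rewrite -(big_enum_val (fun x => (i == x)%:R) : _ = \sum_(k < #|C|) _).
case: (boolP (i \in C)) => hi.
  rewrite (bigD1 i) //= big1 ?eqxx ?addr0 //.
  by move=> j /andP [_ hj]; rewrite eq_sym (negbTE hj).
by rewrite big1 // => j hj; case: eqP hj => // <-; rewrite (negbTE hi).
Qed.

Lemma proj_diag n (w : 'rV[R]_n) (C : {set 'I_n}) : (forall i, 0 < w 0 i) ->
  proj_S (diag_mx w) C = colsel R C *m (colsel R C)^T.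
Proof.
move=> hw; rewrite /proj_S.
set S := colsel R C.
pose Dc : 'M[R]_#|C| := diag_mx (\row_(k < #|C|) w 0 (@enum_val _ (mem C) k)).
have e1 : S^T *m diag_mx w = Dc *m S^T.
  rewrite mul_mx_diag mul_diag_mx; apply/matrixP => k j; rewrite !mxE.
  by case: eqP => [->|]; rewrite ?mul1r ?mulr1 ?mul0r ?mulr0.
have e2 : S^T *m diag_mx w *m S = Dc.
  rewrite e1 -mulmxA; apply/matrixP => k l.
  rewrite mul_diag_mx !mxE (bigD1 (enum_val k)) //= big1.
    rewrite !mxE eqxx mul1r addr0 (inj_eq enum_val_inj).
    by rewrite mulr_natr.
  by move=> j /negbTE hj; rewrite !mxE hj mul0r.
have Du : Dc \in unitmx.
  rewrite unitmxE det_diag unitfE; apply/prodf_neq0 => k _.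
  by rewrite mxE gt_eqF.
rewrite e2 pinv_unit // -!mulmxA e1. by rewrite mulKmx.
Qed.


Lemma sum_bool_card (T : finType) (G : {set T}) (b : T -> bool) :
  \sum_(C in G) ((b C)%:R : R) = #|[set C in G | b C]|%:R.
Proof.
rewrite (eq_bigr (fun C => if b C then 1 else 0)); last by move=> C _; case: (b C).
rewrite -big_mkcondr sumr_const cardsE.
congr (_ *+ _); apply: eq_card => C; rewrite !inE.
Qed.

Lemma outer_C n (w : 'rV[R]_n) (C : {set 'I_n}) : (forall i, 0 < w 0 i) ->
  proj_S (diag_mx w) C *m ones R n *m (ones R n)^T *m (proj_S (diag_mx w) C)^T
  = \matrix_(i, j) (((i \in C) && (j \in C))%:R : R).
Proof.
move=> hw; rewrite proj_diag //.
have h : colsel R C *m (colsel R C)^T *m ones R n = \col_i (i \in C)%:R.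
  by rewrite -mulmxA colselT_ones colsel_ones.
rewrite h -mulmxA -trmx_mul h; apply/matrixP => i j.
rewrite !mxE big_ord1 !mxE.
by case: (i \in C); case: (j \in C); rewrite ?mulr1 ?mulr0.
Qed.

Lemma expect_entries n (w : 'rV[R]_n) G c1 : (forall i, 0 < w 0 i) ->
  expect_term (diag_mx w) G c1 = \matrix_(i, j)
    ((#|G|%:R)^-1 * (theta R G c1 ^+ 2 * #|[set C in G | (i \in C) && (j \in C)]|%:R)).
Proof.
move=> hw; rewrite /expect_term; apply/matrixP => i j.
rewrite !mxE summxE; congr (_ * _).
under eq_bigr do rewrite mxE outer_C // mxE.
by rewrite -mulr_sumr sum_bool_card.
Qed.

Lemma seq_max (s : seq R) : s != [::] -> exists2 m, m \in s & forall y, y \in s -> y <= m.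
Proof.
elim: s => // x [|y s] IH _.
  by exists x; rewrite ?mem_seq1 // => z; rewrite mem_seq1 => /eqP ->.
have [m ms hm] := IH isT.
case: (leP m x) => hmx.
  exists x; first by rewrite mem_head.
  move=> z; rewrite in_cons => /orP [/eqP ->//|/hm hz]; exact: le_trans hz hmx.
exists m; first by rewrite in_cons ms orbT.
move=> z; rewrite in_cons => /orP [/eqP ->|/hm //]; exact: ltW.
Qed.

Lemma lmax_spec n (A : 'M[R]_n) a0 : eigenvalue A a0 ->
  eigenvalue A (lambda_max A) /\ forall a, eigenvalue A a -> a <= lambda_max A.
Proof.
move=> h0; rewrite /lambda_max; apply: (epsilon_spec (inhabits 0) (fun l => eigenvalue A l /\ forall a, eigenvalue A a -> a <= l)).
have pn0 : char_poly A != 0 by apply: monic_neq0; apply: char_poly_monic.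
have hr := roots_on_rootsR pn0.
have ins a : eigenvalue A a = (a \in rootsR (char_poly A)).
  by rewrite eigenvalue_root_char -hr.
have [m ms hm] : exists2 m, m \in rootsR (char_poly A) & forall y, y \in rootsR (char_poly A) -> y <= m.
  apply: seq_max; apply/eqP => e; move: h0; by rewrite ins e.
by exists m; split; [rewrite ins | move=> a; rewrite ins; apply: hm].
Qed.

Lemma le_bigmax_seq (I : eqType) (r : seq I) (F : I -> R) x0 j : j \in r ->
  F j <= \big[Num.max/x0]_(i <- r) F i.
Proof.
elim: r => // i r IH; rewrite in_cons big_cons => /orP [/eqP ->|/IH h].
  by rewrite le_max lexx.
by rewrite le_max h orbT.
Qed.

Lemma le_fmax n (f : 'I_n -> R) j : f j <= fmax f.
Proof.
case: n f j => [|m] f j; first by case: j.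
by rewrite /fmax; apply: le_bigmax_seq; rewrite mem_index_enum.
Qed.
Lemma sym_eigen_exists n (A : 'M[R]_n.+1) :
  A^T = A -> exists a, eigenvalue A a.
Proof.
move=> Asym.
pose Ac : 'M[R[i]]_n.+1 := map_mx (real_complex R) A.
have Ah : Ac \is hermsymmx.
  apply/is_hermitianmxP; rewrite expr0 scale1r; apply/matrixP => i j.
  rewrite !mxE; rewrite conj_Creal; last by rewrite complex_real.
  by rewrite -[in LHS]Asym mxE.
have /orthomx_spectralP Aeq := hermitian_normalmx Ah.
have dreal := hermitian_spectral_diag_real Ah.
set P := spectralmx Ac in Aeq; set d := spectral_diag Ac in Aeq dreal.
have Pu : P \in unitmx by exact: spectral_unit.
have ev : eigenvalue Ac (d 0 0).
  apply/eigenvalueP; exists (delta_mx 0 0 *m P).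
    rewrite Aeq !mulmxA mulmxK //.
    rewrite scalemxAl; congr (_ *m _); apply/matrixP => i j.
    rewrite mul_mx_diag !mxE ord1 eqxx /=.
    by case: eqP => [->|_]; rewrite ?mul1r ?mulr1 ?mul0r ?mulr0.
  rewrite mulmx_free_eq0 ?row_free_unit //; apply/eqP => /matrixP/(_ 0 0); rewrite !mxE !eqxx /= => /eqP; by rewrite oner_eq0.
have /complex_realP [r hr] : d 0 0 \is Num.real by exact: (mxOverP dreal).
exists r.
move: ev; rewrite hr !eigenvalue_root_char -map_char_poly.
by rewrite fmorph_root.
Qed.

Lemma M_entries n (w : 'rV[R]_n) (G : {set {set 'I_n}}) (c1 c2 : nat) :
  (forall i, 0 < w 0 i) -> (1 <= c1)%N -> (#|G| != 0)%N ->
  (forall i : 'I_n, #|[set C in G | i \in C]| = c1) ->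
  (forall i j : 'I_n, i != j -> pair_count G i j = c2) ->
  expect_term (diag_mx w) G c1 - ones R n *m (ones R n)^T =
  \matrix_(i, j) (if i == j then #|G|%:R / c1%:R - 1
                  else #|G|%:R * c2%:R / (c1%:R ^+ 2) - 1).
Proof.
move=> hw hc1 hG hunif hpc.
rewrite expect_entries //; apply/matrixP => i j.
rewrite !mxE big_ord1 !mxE mulr1.
have c1n : (c1%:R : R) != 0 by rewrite pnatr_eq0 -lt0n.
have Gn : (#|G|%:R : R) != 0 by rewrite pnatr_eq0.
rewrite /theta; case: eqP => [<-|/eqP ij].
  have -> : [set C in G | (i \in C) && (i \in C)] = [set C in G | i \in C].
    by apply/setP => C; rewrite !inE andbb.
  rewrite hunif; congr (_ - _); field; exact/andP.
move: (hpc i j ij); rewrite /pair_count => ->.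
congr (_ - _); field; exact/andP.
Qed.

Lemma fin_argmax m (F : 'I_m.+1 -> R) : exists j, forall i, F i <= F j.
Proof.
have ne : [seq F i | i <- enum 'I_m.+1] != [::].
  by rewrite -size_eq0 size_map size_enum_ord.
have [x xs hx] := seq_max _ ne.
case/mapP: xs => j _ xe; exists j => i; rewrite -xe; apply: hx.
by apply/mapP; exists i; rewrite ?mem_enum.
Qed.

Lemma part1 m (G : {set {set 'I_m.+1}}) (c1 c2 : nat) (w : 'rV[R]_m.+1) :
  (forall i, 0 < w 0 i) -> (1 <= c1)%N -> (#|G| != 0)%N ->
  (forall i : 'I_m.+1, #|[set C in G | i \in C]| = c1) ->
  (forall i j : 'I_m.+1, i != j -> pair_count G i j = c2) ->
  rho (diag_mx w) (diag_mx (map_mx Num.sqrt w)) G c1 <=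
     fmax (fun i : 'I_m.+1 =>
       (#|G|%:R / c1%:R - 1) * w 0 i
       + \sum_(j < m.+1 | j != i) w 0 j
           * `|#|G|%:R * c2%:R / (c1%:R ^+ 2) - 1|).
Proof.
move=> hw hc1 hG hunif hpc.
rewrite /rho (@M_entries _ w G c1 c2 hw hc1 hG hunif hpc).
set a := (#|G|%:R / c1%:R - 1 : R).
set b := (#|G|%:R * c2%:R / (c1%:R ^+ 2) - 1 : R).
set s := map_mx Num.sqrt w.
have hs i : 0 < s 0 i by rewrite mxE sqrtr_gt0.
have hs2 i : s 0 i ^+ 2 = w 0 i by rewrite mxE sqr_sqrtr // ltW.
set N := (X in lambda_max X).
have NE : N = \matrix_(i, j) (s 0 i * (if i == j then a else b) * s 0 j).
  by rewrite /N mul_diag_mx mul_mx_diag; apply/matrixP => i j; rewrite !mxE.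
have Nsym : N^T = N.
  rewrite NE; apply/matrixP => i j; rewrite !mxE eq_sym. ring.
have [a0 ha0] := sym_eigen_exists _ _ Nsym.
have [hl _] := lmax_spec _ _ _ ha0.
set l := lambda_max N in hl *.
case/eigenvalueP: hl => v hv vn0.
pose y i := v 0 i / s 0 i.
have vy i : v 0 i = y i * s 0 i by rewrite /y divfK // gt_eqF.
have [j hj] := fin_argmax _ (fun i => `|y i|).
have yj : 0 < `|y j|.
  have [k vk] : exists k, v 0 k != 0.
    apply/existsP; apply: contraR vn0 => /existsPn h; apply/eqP/matrixP => r k.
    by rewrite ord1 mxE; apply/eqP; move: (h k); rewrite negbK.
  apply: (lt_le_trans _ (hj k)); rewrite normr_gt0 /y mulf_neq0 // invr_eq0 gt_eqF //.
clearbody y.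
have eq1 : \sum_i y i * w 0 i * (if i == j then a else b) = l * y j.
  move: hv => /(congr1 (fun X : 'rV[R]_m.+1 => X 0 j)); rewrite !mxE NE.
  under eq_bigr do rewrite mxE vy.
  rewrite vy => h.
  apply: (@mulIf _ (s 0 j)); first by rewrite gt_eqF.
  rewrite -mulrA -h mulr_suml; apply: eq_bigr => i _.
  rewrite -hs2 expr2; set t := (if _ then _ else _); by rewrite !mulrA [_ * t * s 0 j]mulrAC.
rewrite (bigD1 j) //= eqxx in eq1.
have eq2 : (l - a * w 0 j) * y j = \sum_(i | i != j) y i * w 0 i * b.
  have e : \sum_(i | i != j) y i * w 0 i * (if i == j then a else b) = \sum_(i | i != j) y i * w 0 i * b.
    by apply: eq_bigr => i /negbTE ->.
  rewrite e in eq1; move: eq1; set S := \sum_(i | _) _; move=> h.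
  rewrite mulrBl -h; ring.
have ineq : `|l - a * w 0 j| * `|y j| <= (\sum_(i < m.+1 | i != j) w 0 i * `|b|) * `|y j|.
  rewrite -normrM eq2 mulr_suml.
  apply: (le_trans (ler_norm_sum _ _ _)); apply: ler_sum => i _.
  rewrite !normrM (ger0_norm (ltW (hw i))).
  have := hj i; have : 0 <= w 0 i * `|b| by rewrite mulr_ge0 // ltW. nra.
rewrite ler_pM2r // in ineq.
apply: (le_trans _ (le_fmax _ _ j)); rewrite /=.
have := ler_norm (l - a * w 0 j); lra.
Qed.

Lemma part2 m (G : {set {set 'I_m.+2}}) (c1 c2 : nat) :
  (1 <= c1)%N -> (#|G| != 0)%N ->
  (forall i : 'I_m.+2, #|[set C in G | i \in C]| = c1) ->
  (forall i j : 'I_m.+2, i != j -> pair_count G i j = c2) ->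
  rho (1%:M : 'M[R]_m.+2) (1%:M) G c1 =
    Num.max (#|G|%:R / c1%:R * (1 + ((m.+2)%:R - 1) * (c2%:R / c1%:R)) - (m.+2)%:R)
            (#|G|%:R / c1%:R * (1 - c2%:R / c1%:R)).
Proof.
move=> hc1 hG hunif hpc.
have hw : forall i, 0 < (const_mx 1 : 'rV[R]_m.+2) 0 i by move=> i; rewrite mxE ltr01.
have D1 : (1%:M : 'M[R]_m.+2) = diag_mx (const_mx 1) by rewrite diag_const_mx.
rewrite /rho D1 (@M_entries _ _ G c1 c2 hw hc1 hG hunif hpc).
rewrite diag_const_mx mul1mx mulmx1.
set a := (#|G|%:R / c1%:R - 1 : R).
set b := (#|G|%:R * c2%:R / (c1%:R ^+ 2) - 1 : R).
set M := \matrix_(i, j) _.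
have c1n : (c1%:R : R) != 0 by rewrite pnatr_eq0 -lt0n.
have ev1 : eigenvalue M (a + (m.+1)%:R * b).
  apply/eigenvalueP; exists (const_mx 1 : 'rV_m.+2).
    apply/matrixP => i j; rewrite !mxE (bigD1 j) //= !mxE eqxx mul1r mulr1.
    have -> : \sum_(k | k != j) (const_mx 1 : 'rV[R]_m.+2) i k * M k j = \sum_(k | k != j) b.
      by apply: eq_bigr => k /negbTE h; rewrite !mxE h mul1r.
    rewrite sumr_const cardC1 card_ord /=. rewrite mulr_natl. by [].
  apply/eqP => /matrixP /(_ 0 0); rewrite !mxE; apply/eqP; exact: oner_neq0.
have ev2 : eigenvalue M (a - b).
  pose i1 : 'I_m.+2 := @Ordinal m.+2 1 isT.
  have h01 : (i1 == ord0) = false by [].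
  apply/eigenvalueP; exists (delta_mx 0 ord0 - delta_mx 0 i1 : 'rV_m.+2).
    rewrite mulmxBl -!rowE; apply/matrixP => i j; rewrite !mxE.
    rewrite ord1 !eqxx /=.
    case: (eqVneq j ord0) => [->|j0]; first by rewrite h01 eq_sym h01 /=; ring.
    case: (eqVneq j i1) => _ /=; ring.
  apply/eqP => /matrixP /(_ 0 ord0); rewrite !mxE /=. rewrite subr0; apply/eqP; exact: oner_neq0.
have evall : forall x, eigenvalue M x -> x = a + (m.+1)%:R * b \/ x = a - b.
  move=> x /eigenvalueP [v hv vn0].
  set S := \sum_i v 0 i.
  have hj j : x * v 0 j = (a - b) * v 0 j + b * S.
    move: hv => /(congr1 (fun X : 'rV[R]_m.+2 => X 0 j)); rewrite !mxE => <-.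
    rewrite /S (bigD1 j) //= [in RHS](bigD1 j) //= mxE eqxx.
    have -> : \sum_(i | i != j) v 0 i * M i j = b * \sum_(i | i != j) v 0 i.
      by rewrite mulr_sumr; apply: eq_bigr => i /negbTE h; rewrite mxE h mulrC.
    ring.
  have hS : x * S = ((a - b) + (m.+2)%:R * b) * S.
    rewrite /S !mulr_sumr; under eq_bigr do rewrite hj.
    rewrite big_split /= sumr_const card_ord -!mulr_sumr -/S -mulr_natr; ring.
  case: (eqVneq S 0) => S0.
    right.
    have [k vk] : exists k, v 0 k != 0.
      apply/existsP; apply: contraR vn0 => /existsPn h; apply/eqP/matrixP => r k.
      by rewrite ord1 mxE; apply/eqP; move: (h k); rewrite negbK.
    by apply: (mulIf vk); rewrite hj S0 mulr0 addr0.
  left; move: (mulIf S0 hS) => ->; rewrite mulrS; ring.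
have [hl hmax] := lmax_spec _ _ _ ev1.
have E1 : a + (m.+1)%:R * b = #|G|%:R / c1%:R * (1 + ((m.+2)%:R - 1) * (c2%:R / c1%:R)) - (m.+2)%:R.
  rewrite /a /b [in RHS]mulrS; field; exact: c1n.
have E2 : a - b = #|G|%:R / c1%:R * (1 - c2%:R / c1%:R).
  rewrite /a /b; field; exact: c1n.
rewrite -E1 -E2; apply/le_anti/andP; split.
  by case: (evall _ hl) => ->; rewrite le_max lexx ?orbT.
by rewrite ge_max !hmax.
Qed.
End S.

Theorem theorem4p19 (R : rcfType) (n : nat) (hn : (2 <= n)%N)
  (G : {set {set 'I_n}}) (c1 c2 : nat)
  (hpair : exists c : nat, forall i j : 'I_n, i != j -> pair_count G i j = c)
  (hc2 : c2 = pair_count_nat G 0 1)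
  (hc1 : (1 <= c1)%N)
  (hunif : forall i : 'I_n, #|[set C in G | i \in C]| = c1) :
  (forall w : 'rV[R]_n, (forall i, 0 < w 0 i) ->
     rho (diag_mx w) (diag_mx (map_mx Num.sqrt w)) G c1 <=
     fmax (fun i : 'I_n =>
       (#|G|%:R / c1%:R - 1) * w 0 i
       + \sum_(j < n | j != i) w 0 j
           * `|#|G|%:R * c2%:R / (c1%:R ^+ 2) - 1|))
  /\
  rho (1%:M : 'M[R]_n) (1%:M) G c1 =
    Num.max (#|G|%:R / c1%:R * (1 + (n%:R - 1) * (c2%:R / c1%:R)) - n%:R)
            (#|G|%:R / c1%:R * (1 - c2%:R / c1%:R)).
Proof.
have [c hc] := hpair.
destruct n as [|[|m]]; try by [].
pose i0 : 'I_m.+2 := ord0.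
pose i1 : 'I_m.+2 := @Ordinal m.+2 1 isT.
have c2c : c2 = c.
  rewrite hc2 -(hc i0 i1 isT) /pair_count_nat /pair_count; apply: eq_card => C.
  rewrite !inE; congr (_ && (_ && _)).
    apply/existsP/idP => [[i /andP [iC /eqP hi]]|iC].
      by have -> : i0 = i by apply/val_inj.
    by exists i0; rewrite iC.
  apply/existsP/idP => [[i /andP [iC /eqP hi]]|iC].
    by have -> : i1 = i by apply/val_inj.
  by exists i1; rewrite iC.
have hpc : forall i j : 'I_m.+2, i != j -> pair_count G i j = c2.
  by move=> i j ij; rewrite c2c hc.
have hG : (#|G| != 0)%N.
  apply/eqP => G0; move: (hunif i0); have : (#|[set C in G | i0 \in C]| <= #|G|)%N.
    by apply: subset_leq_card; apply/subsetP => C; rewrite inE => /andP [].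
  by rewrite G0 leqn0 => /eqP -> h; move: hc1; rewrite -h.
split.
  by move=> w hw; apply: part1.
exact: part2.
Qed.
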